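(* Let $n\ge1$ and $A\in\mathbb{R}^{n\times n}$. (i) If $A=B+C$ for some weakly algebraically independent $B,C\in\mathbb{R}^{n\times n}$, then $A$ is transcendental. (ii) If $A$ is not weakly algebraic, then there exist weakly algebraically independent $B,C\in\mathscr{L}_{n,n}$ with $B+C=A$.
   Context: Polynomials in several non-commuting variables with integer coefficients ($\mathbb{Z}\langle X_0,\ldots,X_\ell\rangle$) are evaluated at real $n\times n$ matrices by substitution (constant term times $I_n$). $A$ is algebraic if $P(A)=\mathbf{0}$ for some nonzero $P\in\mathbb{Z}[X]$, and transcendental otherwise. $A$ is weakly algebraic if there exist an integer $\ell\ge0$ and $P\in\mathbb{Z}\langle X_0,\ldots,X_\ell\rangle$ such that $P(A,B_1,\ldots,B_\ell)=\mathbf{0}$ for all $B_1,\ldots,B_\ell\in\mathbb{R}^{n\times n}$, but $P(C_0,\ldots,C_\ell)\ne\mathbf{0}$ for some $C_0,\ldots,C_\ell\in\mathbb{R}^{n\times n}$. $B,C$ are weakly algebraically independent if every $P\in\mathbb{Z}\langle X,Y\rangle$ with $P(B,C)=\mathbf{0}$ satisfies $P(C_0,C_1)=\mathbf{0}$ for all $C_0,C_1\in\mathbb{R}^{n\times n}$. $\Vert\cdot\Vert$ is the supremum norm; a real $m\times n$ matrix $A$ is a Liouville matrix if $A\mathbf{q}-\mathbf{p}\neq\mathbf{0}$ for all nonzero $(\mathbf{q},\mathbf{p})\in\mathbb{Z}^n\times\mathbb{Z}^m$ and for every $N$ there exist $\mathbf{p}\in\mathbb{Z}^m$, $\mathbf{q}\in\mathbb{Z}^n\setminus\{\mathbf{0}\}$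 with $\Vert A\mathbf{q}-\mathbf{p}\Vert<\Vert\mathbf{q}\Vert^{-N}$; $\mathscr{L}_{m,n}$ is the set of these. *)

(* Defs.v *)
From HB Require Import structures.
From mathcomp Require Import all_boot all_order all_algebra.
From mathcomp Require Import reals.
Set Implicit Arguments. Unset Strict Implicit. Unset Printing Implicit Defensive.
Import Order.TTheory GRing.Theory Num.Theory.
Local Open Scope ring_scope.

Inductive ncpoly (k : nat) : Type :=
| NCconst of int
| NCvar of 'I_k
| NCopp of ncpoly k
| NCadd of ncpoly k & ncpoly k
| NCmul of ncpoly k & ncpoly k.

Fixpoint nceval (R : realType) (n k : nat) (X : 'I_k -> 'M[R]_n.+1)
  (P : ncpoly k) : 'M[R]_n.+1 :=
  match P with
  | NCconst c => (c%:~R : R)%:M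
  | NCvar i => X i
  | NCopp p => - nceval X p
  | NCadd p q => nceval X p + nceval X q
  | NCmul p q => nceval X p *m nceval X q
  end.

Definition zpoly_eval (R : realType) (n : nat) (p : {poly int}) (A : 'M[R]_n.+1)
  : 'M[R]_n.+1 :=
  \sum_(i < size p) ((p`_i)%:~R : R) *: (A ^+ i).

Definition algebraic (R : realType) (n : nat) (A : 'M[R]_n.+1) : Prop :=
  exists p : {poly int}, p != 0 /\ zpoly_eval p A = 0.

Definition transcendental (R : realType) (n : nat) (A : 'M[R]_n.+1) : Prop :=
  ~ algebraic A.

Definition weakly_algebraic (R : realType) (n : nat) (A : 'M[R]_n.+1) : Prop :=
  exists (l : nat) (P : ncpoly l.+1),
    (forall X : 'I_l.+1 -> 'M[R]_n.+1, X ord0 = A -> nceval X P = 0) /\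
    (exists C : 'I_l.+1 -> 'M[R]_n.+1, nceval C P != 0).

Definition pair_env (R : realType) (n : nat) (B C : 'M[R]_n.+1)
  : 'I_2 -> 'M[R]_n.+1 := fun i => if val i == 0%N then B else C.

Definition weakly_alg_indep (R : realType) (n : nat) (B C : 'M[R]_n.+1) : Prop :=
  forall P : ncpoly 2, nceval (pair_env B C) P = 0 ->
    forall C0 C1 : 'M[R]_n.+1, nceval (pair_env C0 C1) P = 0.

Definition supnorm (R : realType) (k : nat) (v : 'cV[R]_k) : R :=
  \big[Num.max/0]_(i < k) `|v i 0|.

Definition intvec (R : realType) (k : nat) (q : 'cV[int]_k) : 'cV[R]_k :=
  map_mx (fun z : int => (z%:~R : R)) q.

Definition liouville (R : realType) (m n : nat) (A : 'M[R]_(m, n)) : Prop :=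
  (forall (q : 'cV[int]_n) (p : 'cV[int]_m),
      ~~ ((q == 0) && (p == 0)) -> A *m intvec R q - intvec R p != 0) /\
  (forall N : nat, exists (p : 'cV[int]_m) (q : 'cV[int]_n),
      q != 0 /\
      supnorm (A *m intvec R q - intvec R p) < (supnorm (intvec R q)) ^- N).

(* Main.v *)
Require Import Defs.
From HB Require Import structures.
From mathcomp Require Import all_boot all_order all_algebra.
From mathcomp Require Import reals.
From mathcomp Require Import all_classical all_reals all_analysis.
From mathcomp Require Import ring lra.
Import Order.TTheory GRing.Theory Num.Theory.
Import numFieldNormedType.Exports.
Local Open Scope classical_set_scope.
Local Open Scope ring_scope.

Fixpoint ncsubst {k l} (s : 'I_k -> ncpoly l) (P : ncpoly k) : ncpoly l :=
  match P with
  | NCconst c => NCconst l c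
  | NCvar i => s i
  | NCopp p => NCopp (ncsubst s p)
  | NCadd p q => NCadd (ncsubst s p) (ncsubst s q)
  | NCmul p q => NCmul (ncsubst s p) (ncsubst s q)
  end.

Fixpoint hornernc {k} (x : ncpoly k) (s : seq int) : ncpoly k :=
  match s with
  | [::] => NCconst k 0
  | c :: s' => NCadd (NCconst k c) (NCmul x (hornernc x s'))
  end.

Section Count.
Variable k : nat.
Fixpoint ncenc (P : ncpoly k) : GenTree.tree (int + 'I_k) :=
  match P with
  | NCconst c => GenTree.Leaf (inl c)
  | NCvar i => GenTree.Leaf (inr i)
  | NCopp p => GenTree.Node 0 [:: ncenc p]
  | NCadd p q => GenTree.Node 1 [:: ncenc p; ncenc q]
  | NCmul p q => GenTree.Node 2 [:: ncenc p; ncenc q]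
  end.
Fixpoint ncdec (t : GenTree.tree (int + 'I_k)) : option (ncpoly k) :=
  match t with
  | GenTree.Leaf (inl c) => Some (NCconst k c)
  | GenTree.Leaf (inr i) => Some (NCvar i)
  | GenTree.Node 0 [:: t1] =>
      if ncdec t1 is Some p then Some (NCopp p) else None
  | GenTree.Node 1 [:: t1; t2] =>
      match ncdec t1, ncdec t2 with Some p, Some q => Some (NCadd p q) | _, _ => None end
  | GenTree.Node 2 [:: t1; t2] =>
      match ncdec t1, ncdec t2 with Some p, Some q => Some (NCmul p q) | _, _ => None end
  | _ => None
  end.
Lemma ncencK : pcancel ncenc ncdec.
Proof. by elim => //= [p ->|p -> q ->|p -> q ->]. Qed.
HB.instance Definition _ := Countable.copy (ncpoly k) (pcan_type ncencK).
End Count.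

Section All.
Variable R : realType.
Variable n : nat.
Local Notation M := 'M[R]_n.+1.


Lemma mx_cont (T : topologicalType) m k (f : T -> 'M[R]_(m, k)) :
  (forall i j, continuous (fun x => f x i j)) -> continuous f.
Proof.
move=> fc x A [P hP hA].
have : \forall y \near x, forall ij : 'I_m * 'I_k, P ij.1 ij.2 (f y ij.1 ij.2).
  apply: filter_forall => -[i j]; exact: (fc i j x _ (hP i j)).
by apply: filterS => y hy; apply: hA => i j; exact: (hy (i, j)).
Qed.

Lemma entry_cont (T : topologicalType) m k (f : T -> 'M[R]_(m, k)) i j :
  continuous f -> continuous (fun x => f x i j).
Proof.
move=> fc x; exact: (continuous_comp (fc x) (@coord_continuous R m k i j (f x))).
Qed.

Lemma big_cont (T U : topologicalType) (op : U -> U -> U) (idx : U)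
  (hop : forall f g : T -> U, continuous f -> continuous g ->
     continuous (fun x => op (f x) (g x)))
  (I : Type) (r : seq I) (P : pred I) (F : I -> T -> U) :
  (forall i, continuous (F i)) ->
  continuous (fun x => \big[op/idx]_(i <- r | P i) F i x).
Proof.
move=> Fc; elim: r => [|i r IH].
  under eq_fun do rewrite big_nil; exact: cst_continuous.
under eq_fun do rewrite big_cons.
case: (P i); last exact: IH.
exact: hop.
Qed.

Lemma addR_cont (T : topologicalType) (f g : T -> R) :
  continuous f -> continuous g -> continuous (fun x => f x + g x).
Proof. move=> fc gc x; exact: (continuousD (fc x) (gc x)). Qed.

Lemma mulR_cont (T : topologicalType) (f g : T -> R) :
  continuous f -> continuous g -> continuous (fun x => f x * g x).
Proof. move=> fc gc x; exact: (continuousM (fc x) (gc x)). Qed.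

Lemma mulmx_cont (T : topologicalType) a b c (F : T -> 'M[R]_(a, b))
  (G : T -> 'M[R]_(b, c)) :
  continuous F -> continuous G -> continuous (fun x => F x *m G x).
Proof.
move=> Fc Gc; apply: mx_cont => i j.
under eq_fun do rewrite mxE.
apply: big_cont; first exact: addR_cont.
move=> k; apply: mulR_cont; exact: entry_cont.
Qed.



Lemma nceval_ext k (X Y : 'I_k -> M) P : (forall i, X i = Y i) ->
  nceval X P = nceval Y P.
Proof. by move=> XY; elim: P => //= [p->|p -> q ->|p -> q ->]. Qed.

Lemma nceval_subst k l (s : 'I_k -> ncpoly l) (X : 'I_l -> M) P :
  nceval X (ncsubst s P) = nceval (fun i => nceval X (s i)) P.
Proof. by elim: P => //= [p->|p -> q ->|p -> q ->]. Qed.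

Lemma nceval_cont k (P : ncpoly k) (T : topologicalType) (f : 'I_k -> T -> M) :
  (forall i, continuous (f i)) -> continuous (fun x => nceval (fun i => f i x) P).
Proof.
move=> fc; elim: P => /= [c|i|p IH|p IHp q IHq|p IHp q IHq].
- exact: cst_continuous.
- exact: fc.
- move=> x; exact: (continuousN (IH x)).
- move=> x; exact: (continuousD (IHp x) (IHq x)).
- exact: mulmx_cont.
Qed.

Fixpoint mpol {k} (U V : 'I_k -> M) (P : ncpoly k) : {poly M} :=
  match P with
  | NCconst c => ((c%:~R : R)%:M)%:P
  | NCvar i => (U i)%:P + (V i)%:P * 'X
  | NCopp p => - mpol U V p
  | NCadd p q => mpol U V p + mpol U V q
  | NCmul p q => mpol U V p * mpol U V q
  end.

Lemma mpolE k (U V : 'I_k -> M) P (t : R) :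
  (mpol U V P).[t%:M] = nceval (fun i => U i + t *: V i) P.
Proof.
elim: P => /= [c|i|p IH|p IHp q IHq|p IHp q IHq].
- by rewrite hornerC.
- rewrite hornerD hornerC hornerMX hornerC.
  by rewrite -mulmxE mul_mx_scalar.
- by rewrite hornerN IH.
- by rewrite hornerD IHp IHq.
- rewrite hornerM_comm ?IHp ?IHq ?mulmxE //.
  by rewrite /comm_poly; apply/esym/scalar_mxC.
Qed.

Lemma poly_zero_itv (p : {poly R}) (d : R) : 0 < d ->
  (forall t, 0 < t < d -> p.[t] = 0) -> p = 0.
Proof.
move=> d0 h; apply/eqP; apply: contraT => pn0.
pose rs := [seq d / (i.+2)%:R | i <- iota 0 (size p)].
have := @max_poly_roots R p rs pn0.
rewrite size_map size_iota ltnn; apply.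
  apply/allP => x /mapP [i _ ->]; apply/rootP; apply: h.
  rewrite divr_gt0 ?ltr0n //=.
  rewrite ltr_pdivrMr ?ltr0n // ltr_pMr // ltr1n //.
rewrite map_inj_uniq ?iota_uniq // => i j /(mulrI _).
rewrite unitfE gt_eqF // => /(_ isT) /invr_inj /eqP.
by rewrite eqr_nat => /eqP [].
Qed.

Lemma scalar_exp (t : R) k : (t%:M : M) ^+ k = (t ^+ k)%:M.
Proof.
elim: k => [|k IH]; first by rewrite !expr0.
by rewrite !exprS IH -mulmxE -scalar_mxM.
Qed.

Lemma horner_entry (q : {poly M}) (t : R) i j :
  (q.[t%:M]) i j = (\poly_(k < size q) (q`_k i j)).[t].
Proof.
rewrite horner_coef horner_poly summxE; apply: eq_bigr => k _.
by rewrite scalar_exp -mulmxE mul_mx_scalar mxE mulrC.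
Qed.

Lemma line_zero k (P : ncpoly k) (U V : 'I_k -> M) (d : R) : 0 < d ->
  (forall t, 0 < t < d -> nceval (fun i => U i + t *: V i) P = 0) ->
  nceval (fun i => U i + V i) P = 0.
Proof.
move=> d0 h.
rewrite (@nceval_ext _ _ (fun i => U i + 1 *: V i)); last by move=> i; rewrite scale1r.
rewrite -mpolE; apply/matrixP => i j; rewrite horner_entry mxE.
suff -> : \poly_(k0 < size (mpol U V P)) (mpol U V P)`_k0 i j = 0 by rewrite horner0.
apply: (poly_zero_itv _ _ d0) => t ht.
by rewrite -horner_entry mpolE h // mxE.
Qed.



Lemma hornerncE k (X : 'I_k -> M) x (s : seq int) :
  nceval X (hornernc x s) =
  \sum_(i < size s) ((s`_i)%:~R : R) *: (nceval X x) ^+ i.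
Proof.
elim: s => [|c s IH] /=.
  by rewrite big_ord0; apply/matrixP => i j; rewrite !mxE mulr0z mul0rn.
rewrite big_ord_recl /= expr0 scalemx1 IH mulmx_sumr; congr (_ + _).
apply: eq_bigr => i _; rewrite exprS -scalemxAr mulmxE //.
Qed.
Lemma zpoly_scalar (p : {poly int}) (t : R) :
  zpoly_eval p (t%:M : M) = ((\poly_(i < size p) ((p`_i)%:~R : R)).[t])%:M.
Proof.
rewrite /zpoly_eval horner_poly raddf_sum; apply: eq_bigr => i _.
by rewrite scalar_exp scale_scalar_mx.
Qed.

Lemma part1 (A : M) : forall B C : M, A = B + C -> weakly_alg_indep B C ->
  transcendental A.
Proof.
move=> B C -> hind [p [pn0 hp]].
pose x : ncpoly 2 := NCadd (NCvar ord0) (NCvar ord_max).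
have e : forall B C : M, nceval (pair_env B C) (hornernc x p) = zpoly_eval p (B + C).
  by move=> B' C'; rewrite hornerncE.
have H := hind (hornernc x p).
rewrite e in H; have {}H := H hp.
have q0 : \poly_(i < size p) ((p`_i)%:~R : R) = 0.
  apply: (@poly_zero_itv _ 1 ltr01) => t _.
  have := H (t%:M) 0; rewrite e addr0 zpoly_scalar => /matrixP /(_ ord0 ord0).
  by rewrite !mxE eqxx mulr1n.
move/negP: pn0; apply; apply/eqP/polyP => i; rewrite coef0.
case: (ltnP i (size p)) => hi; last by rewrite nth_default.
have := congr1 (fun q : {poly R} => q`_i) q0.
by rewrite /= coef_poly hi coef0 => /eqP; rewrite intr_eq0 => /eqP.
Qed.



Lemma ball_entry (X Y : M) e : 0 < e -> (forall i j, `|X i j - Y i j| < e) ->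
  ball X e Y.
Proof.
move=> e0 h; rewrite /ball /=; split => // i j; have := h i j; by rewrite -ball_normE.
Qed.

Lemma ball_norm (X Y : M) e : ball X e Y <-> `|X - Y| < e.
Proof. by rewrite -ball_normE. Qed.

Lemma open_ball (O : set M) B : open O -> O B ->
  exists2 e : R, 0 < e & ball B e `<=` O.
Proof.
move=> oO OB. have : nbhs B O by apply: open_nbhs_nbhs; split.
by move/nbhs_ballP => [e e0 he]; exists e.
Qed.

Lemma open_gt_pre (T : topologicalType) (f : T -> R) c : continuous f ->
  open [set x | c < f x].
Proof.
move=> fc; apply: (@open_comp _ _ f [set y | c < y]); last exact: open_gt.
by move=> x _; exact: fc.
Qed.

Lemma open_lt_pre (T : topologicalType) (f : T -> R) c : continuous f ->
  open [set x | f x < c].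
Proof.
move=> fc; apply: (@open_comp _ _ f [set y | y < c]); last exact: open_lt.
by move=> x _; exact: fc.
Qed.

Lemma open_neq0_pre (T : topologicalType) m k (f : T -> 'M[R]_(m, k)) :
  continuous f -> open [set x | f x != 0].
Proof.
move=> fc.
have -> : [set x | f x != 0] = [set x | 0 < `|f x|].
  by apply/seteqP; split => x /=; rewrite normr_gt0.
apply: open_gt_pre => x.
exact: (continuous_comp (fc x) (@norm_continuous _ _ (f x))).
Qed.

Lemma supnorm_cont (T : topologicalType) k (f : T -> 'cV[R]_k) :
  continuous f -> continuous (fun x => supnorm (f x)).
Proof.
move=> fc; rewrite /supnorm; apply: big_cont.
  by move=> g h gc hc; exact: max_fun_continuous.
move=> i x.
exact: (continuous_comp (@entry_cont _ _ _ f i ord0 fc x) (@norm_continuous R R _)).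

Qed.

Lemma supnorm_ge k (v : 'cV[R]_k) i : `|v i 0| <= supnorm v.
Proof. by rewrite /supnorm (bigD1 i) //= le_max lexx. Qed.

Lemma supnorm0 k : supnorm (0 : 'cV[R]_k) = 0.
Proof.
rewrite /supnorm; elim/big_ind: _ => //.
  by move=> x y -> ->; rewrite maxxx.
by move=> i _; rewrite mxE normr0.
Qed.

Lemma intvec_eq0 k (q : 'cV[int]_k) : (intvec R q == 0) = (q == 0).
Proof.
apply/eqP/eqP => [h|->]; apply/matrixP => i j.
  by move/matrixP: h => /(_ i j); rewrite !mxE => /eqP; rewrite intr_eq0 => /eqP.
by rewrite !mxE.
Qed.

Lemma supnorm_pos k (q : 'cV[int]_k) : q != 0 -> 0 < supnorm (intvec R q).
Proof.
rewrite -intvec_eq0 => /eqP qn0.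
have [i [j hij]] : exists i j, intvec R q i j != 0.
  apply/not_existsP => hn; apply: qn0; apply/matrixP => i j; rewrite [RHS]mxE.
  case: (eqVneq (intvec R q i j) 0) => // hne; exfalso; apply: (hn i); by exists j.
have j0 : j = 0 by apply: ord1.
subst j; apply: lt_le_trans (@supnorm_ge _ (intvec R q) i); by rewrite normr_gt0.
Qed.



Lemma approx1 (Y0 : M) e (q p : 'cV[int]_n.+1) : 0 < e ->
  ~~ ((q == 0) && (p == 0)) ->
  exists Y : M, ball Y0 e Y /\ Y *m intvec R q - intvec R p != 0.
Proof.
move=> e0 hqp.
case: (eqVneq (Y0 *m intvec R q - intvec R p) 0) => h; last first.
  by exists Y0; split => //; exact: ballxx.
have qn0 : q != 0.
  apply/negP => /eqP q0; move: h hqp; rewrite q0 eqxx /=.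
  have -> : intvec R (0 : 'cV[int]_n.+1) = 0 by apply/matrixP => i j; rewrite !mxE.
  rewrite mulmx0 sub0r => /eqP; rewrite oppr_eq0 intvec_eq0 => ->.
  by [].
have [j hj] : exists j, q j 0 != 0.
  apply/not_existsP => hn; move/eqP: qn0; apply; apply/matrixP => i k.
  rewrite (ord1 k) mxE; case: (eqVneq (q i 0) 0) => // hne; exfalso; exact: (hn i).
pose Y := Y0 + (e / 2) *: delta_mx 0 j.
exists Y; split.
  apply: ball_entry => // a b; rewrite !mxE opprD addrA subrr sub0r normrN.
  have e2 : 0 <= e / 2 by rewrite divr_ge0 // ltW.
  rewrite normrM (ger0_norm e2).
  apply: (@le_lt_trans _ _ (e / 2)); last by rewrite ltr_pdivrMr // ltr_pMr // ltr1n.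
  rewrite ler_piMr //.
  by case: (_ && _); rewrite ?normr1 ?normr0.
rewrite /Y mulmxDl addrAC h add0r -scalemxAl.
apply/negP => /eqP /matrixP /(_ 0 0); rewrite !mxE => /eqP.
rewrite mulf_eq0 => /orP [|].
  by rewrite mulf_eq0 invr_eq0 pnatr_eq0 orbF gt_eqF.
rewrite (bigD1 j) //= big1 ?addr0.
  by rewrite !mxE !eqxx mul1r intr_eq0 (negbTE hj).
by move=> k /negbTE hk; rewrite !mxE hk andbF mul0r.
Qed.

Lemma approx2 (Y0 : M) e : 0 < e ->
  exists Y : M, ball Y0 e Y /\ exists p q : 'cV[int]_n.+1,
    q != 0 /\ Y *m intvec R q - intvec R p = 0.
Proof.
move=> e0.
pose d := (Num.trunc (e^-1)).+1.
have dpos : (0 : R) < d%:R by rewrite ltr0n.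
have dn0 : (d%:R : R) != 0 by rewrite gt_eqF.
have hd : d%:R^-1 < e.
  have := truncnS_gt (e^-1).
  by rewrite -ltf_pV2 ?posrE ?invr_gt0 // invrK.
pose Y : M := \matrix_(i, j) ((Num.floor (d%:R * Y0 i j))%:~R / d%:R).
pose q : 'cV[int]_n.+1 := \col_j (if j == 0 then (d%:Z) else 0).
pose p : 'cV[int]_n.+1 := \col_i Num.floor (d%:R * Y0 i 0).
exists Y; split.
  apply: ball_entry => // i j; rewrite mxE.
  set x := d%:R * Y0 i j.
  have -> : Y0 i j = x / d%:R by rewrite /x [d%:R * _]mulrC mulfK.
  rewrite -mulrBl normrM (gtr0_norm (_ : 0 < d%:R^-1)) ?invr_gt0 //.
  apply: le_lt_trans hd; rewrite ler_piMl ?invr_ge0 ?ltW //.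
  have := floor_itv x; move=> /andP [h1 h2].
  rewrite ger0_norm ?subr_ge0 //.
  have e1 : (Num.floor x + 1)%:~R = (Num.floor x)%:~R + 1 :> R by rewrite intrD.
  by rewrite ltrBlDr addrC -e1.
exists p, q; split.
  apply/eqP => /matrixP /(_ 0 0); rewrite !mxE eqxx; by case.
apply/matrixP => i k; rewrite (ord1 k) !mxE (bigD1 0) //= big1 ?addr0.
  by rewrite !mxE eqxx pmulrn divfK // subrr.
by move=> j /negbTE hj; rewrite !mxE hj mulr0.
Qed.



Definition fam (T : countType) (S : T -> set M) k :=
  [set B | forall i, pickle i = k -> S i B].
Arguments fam {T}.

Lemma fam_od (T : countType) (S : T -> set M) k :
  (forall i, open (S i)) -> (forall i, dense (S i)) ->
  open (fam S k) /\ dense (fam S k).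
Proof.
move=> So Sd; have [[i0 hi0]|nex] := pselect (exists i : T, pickle i = k).
  have -> : fam S k = S i0.
    apply/seteqP; split => B /=; first by apply; exact: hi0.
    move=> h i hi; have -> // : i = i0.
    by apply: (pcan_inj pickleK); rewrite hi hi0.
  by split.
have -> : fam S k = setT.
  apply/seteqP; split => B //= _ i hi; exfalso; apply: nex; by exists i.
split; first exact: openT.
by move=> O [x Ox] _; exists x.
Qed.

Definition goodX (X : M -> M) := continuous X /\
  forall B0 e Y, ball (X B0) e Y -> exists B, ball B0 e B /\ X B = Y.

Lemma goodX_id : goodX id.
Proof.
split; first by move=> x; exact: cvg_id.
by move=> B0 e Y h; exists Y.
Qed.

Lemma goodX_sub (A : M) : goodX (fun B => A - B).
Proof.
split.
  move=> x; apply: (continuousD (@cst_continuous _ _ A x)).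
  apply: continuousN; exact: cvg_id.
move=> B0 e Y; rewrite !ball_norm => h; exists (A - Y); split; last by rewrite opprB addrC subrK.
have ee : B0 - (A - Y) = - (A - B0 - Y) by apply/matrixP => i j; rewrite !mxE; ring.
by apply/ball_norm; rewrite ee normrN.
Qed.

Definition vecset (X : M -> M) (qp : 'cV[int]_n.+1 * 'cV[int]_n.+1) :=
  [set B : M | (qp.1 == 0) && (qp.2 == 0) \/
     X B *m intvec R qp.1 - intvec R qp.2 != 0].

Definition liou (X : M -> M) (N : nat) :=
  [set B : M | exists p q : 'cV[int]_n.+1, q != 0 /\
     supnorm (X B *m intvec R q - intvec R p) < supnorm (intvec R q) ^- N].

Lemma aff_cont (X : M -> M) (q p : 'cV[R]_n.+1) : continuous X ->
  continuous (fun B => X B *m q - p).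
Proof.
move=> Xc x; apply: (continuousD _ (@cst_continuous _ _ (- p) x)).
by apply: mulmx_cont => // y; exact: cst_continuous.
Qed.

Lemma vecset_open X qp : continuous X -> open (vecset X qp).
Proof.
move=> Xc; case h: ((qp.1 == 0) && (qp.2 == 0)).
  have -> : vecset X qp = setT by apply/seteqP; split => // B _; left.
  exact: openT.
have -> : vecset X qp = [set B | X B *m intvec R qp.1 - intvec R qp.2 != 0].
  by apply/seteqP; split => B /=; [case => //; rewrite h|right].
by apply: open_neq0_pre; exact: aff_cont.
Qed.

Lemma vecset_dense X qp : goodX X -> dense (vecset X qp).
Proof.
move=> [Xc hX] O [B0 OB0] oO.
have [e e0 he] := @open_ball O B0 oO OB0.
case h: ((qp.1 == 0) && (qp.2 == 0)); first by exists B0; split => //; left.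
have [Y [hY hY2]] := approx1 (X B0) e qp.1 qp.2 e0 (negbT h).
have [B [hB hBY]] := hX _ _ _ hY.
by exists B; split; [exact: he|right; rewrite hBY].
Qed.

Lemma liou_open X N : continuous X -> open (liou X N).
Proof.
move=> Xc; rewrite openE => B [p [q [qn0 hB]]].
have o := @open_lt_pre _ _ (supnorm (intvec R q) ^- N)
  (@supnorm_cont _ _ _ (@aff_cont X (intvec R q) (intvec R p) Xc)).
have : nbhs B [set B' | supnorm (X B' *m intvec R q - intvec R p) <
   supnorm (intvec R q) ^- N] by apply: open_nbhs_nbhs; split.
by apply: filterS => B' hB'; exists p, q.
Qed.

Lemma liou_dense X N : goodX X -> dense (liou X N).
Proof.
move=> [Xc hX] O [B0 OB0] oO.
have [e e0 he] := @open_ball O B0 oO OB0.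
have [Y [hY [p [q [qn0 hYq]]]]] := approx2 (X B0) e e0.
have [B [hB hBY]] := hX _ _ _ hY.
exists B; split; first exact: he.
exists p, q; split => //; rewrite hBY hYq supnorm0.
by rewrite invr_gt0 exprn_gt0 // supnorm_pos.
Qed.



Definition ident (P : ncpoly 2) := forall C0 C1 : M, nceval (pair_env C0 C1) P = 0.
Definition gP (A : M) P (B : M) := nceval (pair_env B (A - B)) P.
Definition cond1 (A : M) P := [set B : M | ident P \/ gP A P B != 0].

Lemma gP_cont A P : continuous (gP A P).
Proof.
have hf : forall i : 'I_2, continuous (fun B : M => pair_env B (A - B) i).
  move=> i; rewrite /pair_env; case: (val i == 0%N).
    by move=> x; exact: cvg_id.
  exact: (goodX_sub A).1.
exact: (@nceval_cont _ P _ _ hf).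
Qed.

Lemma cond1_open A P : open (cond1 A P).
Proof.
have [hid|nid] := pselect (ident P).
  have -> : cond1 A P = setT by apply/seteqP; split => // B _; left.
  exact: openT.
have -> : cond1 A P = [set B | gP A P B != 0].
  by apply/seteqP; split => B /=; [case|right].
exact: (@open_neq0_pre _ _ _ _ (gP_cont A P)).
Qed.


Lemma cond1_dense A P : ~ weakly_algebraic A -> dense (cond1 A P).
Proof.
move=> nwa O [B0 OB0] oO.
have [hid|nid] := pselect (ident P).
  by exists B0; split => //; left.
have [[B [OB hB]]|nex] := pselect (exists B, O B /\ gP A P B != 0).
  by exists B; split => //; right.
exfalso; apply: nwa.
have [e e0 he] := @open_ball O B0 oO OB0.
have g0 : forall B, gP A P B = 0.
  move=> B1; pose D := B1 - B0.
  have dpos : 0 < e / (`|D| + 1).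
    apply: divr_gt0 => //; have := normr_ge0 D; lra.
  have := @line_zero _ P (pair_env B0 (A - B0)) (pair_env D (- D)) _ dpos.
  have ee : forall i, pair_env B0 (A - B0) i + pair_env D (- D) i = pair_env B1 (A - B1) i.
    move=> i; rewrite /pair_env; case: (val i == 0%N); apply/matrixP => a b;
      rewrite /D !mxE; ring.
  rewrite (@nceval_ext _ _ _ P ee); apply => t /andP [t0 td].
  pose Bt := B0 + t *: D.
  have et : forall i, pair_env B0 (A - B0) i + t *: pair_env D (- D) i = pair_env Bt (A - Bt) i.
    move=> i; rewrite /pair_env; case: (val i == 0%N); apply/matrixP => a b;
      rewrite /Bt /D !mxE; ring.
  rewrite (@nceval_ext _ _ _ P et).
  case: (eqVneq (gP A P Bt) 0) => // hne; exfalso; apply: nex; exists Bt; split => //.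
  apply: he; apply/ball_norm.
  have -> : B0 - Bt = - (t *: D) by rewrite /Bt opprD addrA subrr add0r.
  rewrite normrN normrZ (gtr0_norm t0).
  have h1 : t * (`|D| + 1) < e by rewrite -ltr_pdivlMr // (le_lt_trans (normr_ge0 D)) // ltrDl.
  by rewrite mulrDr mulr1 in h1; lra.
have [C0 [C1 hC]] : exists C0 C1 : M, nceval (pair_env C0 C1) P != 0.
  move: nid; rewrite /ident => /existsNP [C0] /existsNP [C1] hC.
  by exists C0, C1; apply/eqP.
pose s : 'I_2 -> ncpoly 2 := fun i => if val i == 0%N then NCvar ord_max
  else NCadd (NCvar ord0) (NCopp (NCvar ord_max)).
exists 1%N, (ncsubst s P); split.
  move=> X hX0; rewrite nceval_subst -(g0 (X ord_max)); apply: nceval_ext => i.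
  by rewrite /pair_env /s; case: (val i == 0%N) => //=; rewrite hX0.
exists (pair_env (C0 + C1) C0); rewrite nceval_subst.
rewrite (@nceval_ext _ _ (pair_env C0 C1)) //.
move=> i; rewrite /pair_env /s; case: (val i == 0%N) => //=.
by apply/matrixP => a b; rewrite !mxE; ring.
Qed.

Definition MM := 'M[R]_(n.+1, n.+1).
HB.instance Definition _ := NormedModule.on MM.
HB.instance Definition _ := Complete.on MM.

Lemma part2 (A : M) : ~ weakly_algebraic A ->
  exists B C : M, [/\ weakly_alg_indep B C, liouville B, liouville C & B + C = A].
Proof.
move=> nwa.
pose F : nat -> set MM := fun k =>
  fam (cond1 A) k `&` fam (vecset id) k `&` fam (vecset (fun B => A - B)) k
  `&` liou id k `&` liou (fun B => A - B) k.
have hod : forall k, open (F k) /\ dense (F k).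
  move=> k.
  have [ho1 hd1] := @fam_od _ _ k (cond1_open A) (fun P => cond1_dense A P nwa).
  have [ho2 hd2] := @fam_od _ _ k (fun qp => @vecset_open id qp goodX_id.1)
     (fun qp => @vecset_dense id qp goodX_id).
  have [ho3 hd3] := @fam_od _ _ k (fun qp => @vecset_open _ qp (goodX_sub A).1)
     (fun qp => @vecset_dense _ qp (goodX_sub A)).
  have ho4 := @liou_open id k goodX_id.1.
  have hd4 := @liou_dense id k goodX_id.
  have ho5 := @liou_open _ k (goodX_sub A).1.
  have hd5 := @liou_dense _ k (goodX_sub A).
  split; first by rewrite /F; repeat apply: openI.
  rewrite /F; apply: denseI; first by repeat apply: openI.
    apply: denseI; first by repeat apply: openI.
      apply: denseI; first by repeat apply: openI.
        by apply: denseI.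
      by [].
    by [].
  by [].
have [B [_ hB]] := @Baire R MM F hod setT (ex_intro _ 0 I) openT.
have hBk : forall k, F k B by move=> k; exact: hB.
exists B, (A - B); split.
- move=> P hP; have [[[[h1 _] _] _] _] := hBk (pickle P).
  case: (h1 P erefl) => // /negP; rewrite /gP hP eqxx; by [].
- split.
    move=> q p hqp; have [[[[_ h2] _] _] _] := hBk (pickle (q, p)).
    by case: (h2 (q, p) erefl) => //= h; rewrite h in hqp.
  by move=> N; have [[_ h4] _] := hBk N.
- split.
    move=> q p hqp; have [[[_ h3] _] _] := hBk (pickle (q, p)).
    by case: (h3 (q, p) erefl) => //= h; rewrite h in hqp.
  by move=> N; have [_ h5] := hBk N.
- by rewrite addrC subrK.
Qed.

End All.

(* n >= 1 is encoded by working with square matrices of size n.+1. *)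
Theorem theorem7 (R : realType) (n : nat) (A : 'M[R]_n.+1) :
  (forall B C : 'M[R]_n.+1, A = B + C -> weakly_alg_indep B C ->
     transcendental A) /\
  (~ weakly_algebraic A ->
     exists B C : 'M[R]_n.+1,
       [/\ weakly_alg_indep B C, liouville B, liouville C & B + C = A]).
Proof. by split; [exact: part1 | exact: part2]. Qed.
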